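(* Let $k\ge0$ and let $G=(X\cup Y,E)$ be a connected bipartite graph. Let $D=(<_X,<_Y)$ be a 2-layer $k$-planar drawing of $G$, and let $S\subseteq X$ be a set of $2k+1$ vertices that are consecutive in $<_X$. Let $x$ and $x'$ be the leftmost and rightmost vertex of $S$ in $<_X$. Then for every connected component $C$ of $G[V(G)\setminus N[S]]$, the vertices of $C\cap X$ are either all to the left of $x$ (i.e., $<_X x$) or all to the right of $x'$.
   Context: $N[S]$ denotes $S$ together with all neighbors of vertices of $S$; $G[U]$ is the induced subgraph. A 2-layer drawing of a bipartite graph $G=(X\cup Y,E)$ ($X\cap Y=\emptyset$, $E\subseteq X\times Y$) is a pair $(<_X,<_Y)$ of strict linear orders on $X$ and $Y$. Edges $\{x,y\},\{x',y'\}$ with $x\ne x'\in X$, $y\ne y'\in Y$ cross if $x<_Xx'$ and $y'<_Yy$. The drawing is $k$-planar if every edge crosses at most $k$ edges. *)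

(* Defs.v *)
From mathcomp Require Import all_boot.
Set Implicit Arguments. Unset Strict Implicit. Unset Printing Implicit Defensive.

Section Bip.
Variables (X Y : finType) (E : X -> Y -> bool).

Definition vtx := (X + Y)%type.

Definition adj : rel vtx := fun u v =>
  match u, v with
  | inl x, inr y => E x y
  | inr y, inl x => E x y
  | _, _ => false
  end.

Definition connected_graph : Prop := forall u v : vtx, connect adj u v.

Definition closed_nbhd (S : {set X}) : {set vtx} :=
  [set v : vtx | match v with
                 | inl x => x \in S
                 | inr y => [exists s in S, E s y]
                 end].

Definition induced_adj (U : {set vtx}) : rel vtx :=
  fun u v => [&& u \in U, v \in U & adj u v].
End Bip.

Definition strict_linear_order (T : finType) (lt : rel T) : Prop :=
  (forall a, ~~ lt a a) /\
  (forall a b c, lt a b -> lt b c -> lt a c) /\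
  (forall a b, a != b -> lt a b || lt b a).

Section Drawing.
Variables (X Y : finType) (E : X -> Y -> bool) (ltX : rel X) (ltY : rel Y).

Definition cross (e f : X * Y) : bool :=
  [&& e.1 != f.1, e.2 != f.2 &
      (ltX e.1 f.1 && ltY f.2 e.2) || (ltX f.1 e.1 && ltY e.2 f.2)].

Definition edges : {set X * Y} := [set e : X * Y | E e.1 e.2].

Definition k_planar (k : nat) : Prop :=
  forall e, e \in edges -> #|[set f in edges | cross e f]| <= k.

Definition consecutive (S : {set X}) : Prop :=
  forall a b c, a \in S -> b \in S -> ltX a c -> ltX c b -> c \in S.
End Drawing.

(* Main.v *)
Require Import Defs.
From mathcomp Require Import all_boot.

Theorem lemma4p1 (k : nat) (X Y : finType) (E : X -> Y -> bool)
    (ltX : rel X) (ltY : rel Y) (S : {set X}) (x x' : X) :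
  connected_graph E ->
  strict_linear_order ltX -> strict_linear_order ltY ->
  k_planar E ltX ltY k ->
  #|S| = (2 * k + 1)%N -> consecutive ltX S ->
  x \in S -> (forall s, s \in S -> s != x -> ltX x s) ->
  x' \in S -> (forall s, s \in S -> s != x' -> ltX s x') ->
  let U := ~: closed_nbhd E S in
  (* C = the component of G[V \ N[S]] containing the vertex v *)
  forall v : vtx X Y, v \in U ->
    (forall u : X, connect (induced_adj E U) v (inl u) -> ltX u x) \/
    (forall u : X, connect (induced_adj E U) v (inl u) -> ltX x' u).
Proof.
move=> conn [irrX [trX totX]] [irrY [trY totY]] kpl cardS consS xS xmin x'S x'max U v vU.
have cls : forall c, c \notin S -> ltX c x || ltX x' c.
  move=> c cS.
  have cx : c != x by apply/eqP => E1; rewrite E1 xS in cS.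
  have cx' : c != x' by apply/eqP => E1; rewrite E1 x'S in cS.
  case/orP: (totX _ _ cx) => [->//|xc].
  case/orP: (totX _ _ cx') => [cx'l|->]; last by rewrite orbT.
  by rewrite (consS _ _ _ xS x'S xc cx'l) in cS.
have inlU : forall c, inl c \in U -> c \notin S.
  by move=> c; rewrite /U inE /closed_nbhd inE.
have inrU : forall y s, inr y \in U -> s \in S -> E s y = false.
  move=> y s; rewrite /U inE /closed_nbhd inE => /existsPn H sS.
  by apply/negbTE; have := H s; rewrite sS.
have nobad : forall a b y, ltX a x -> ltX x' b -> E a y -> E b y ->
    inr y \in U -> False.
  move=> a b y ax x'b Eay Eby yU.
  have aS : a \notin S.
    apply/negP => aS; have [E1|ne] := eqVneq a x; first by rewrite E1 (negbTE (irrX x)) in ax.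
    by have := trX _ _ _ ax (xmin _ aS ne); rewrite (negbTE (irrX a)).
  have nb : forall s, s \in S -> exists y', E s y'.
    move=> s sS; case/connectP: (conn (inl s) (inl a)) => [[|w p]] /=.
      by move=> _ [E1]; rewrite E1 sS in aS.
    case/andP; case: w => [//|y' /= Esy _ _]; by exists y'.
  pose ys s := odflt y [pick y' | E s y'].
  have Eys : forall s, s \in S -> E s (ys s).
    move=> s sS; rewrite /ys; case: pickP => [y' //|H].
    by have [y' Hy] := nb s sS; rewrite H in Hy.
  pose g s := (s, ys s).
  have ginj : injective g by move=> s1 s2 [].
  pose A := [set e in edges E | cross ltX ltY (a, y) e].
  pose B := [set e in edges E | cross ltX ltY (b, y) e].
  have sub : g @: S \subset A :|: B.
    apply/subsetP => e /imsetP [s sS ->].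
    have ed : g s \in edges E by rewrite inE /= Eys.
    have yne : y != ys s.
      by apply/eqP => E1; have := inrU y s yU sS; rewrite E1 Eys.
    have as_ : ltX a s.
      have [->//|ne] := eqVneq s x; exact: trX _ _ _ ax (xmin _ sS ne).
    have sb : ltX s b.
      have [->//|ne] := eqVneq s x'; exact: trX _ _ _ (x'max _ sS ne) x'b.
    have ane : a != s by apply/eqP => E1; rewrite E1 sS in aS.
    have bne : b != s by apply/eqP => E1; rewrite -E1 (negbTE (irrX b)) in sb.
    rewrite inE; case/orP: (totY _ _ yne) => H.
      by apply/orP; right; rewrite inE ed /cross /= bne yne H sb orbT.
    by apply/orP; left; rewrite inE ed /cross /= ane yne H as_.
  have := subset_leq_card sub; rewrite card_imset // cardS => H.
  have := leq_trans H (leq_card_setU A B).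
  have kA : #|A| <= k by apply: kpl; rewrite inE /= Eay.
  have kB : #|B| <= k by apply: kpl; rewrite inE /= Eby.
  have := leq_add kA kB; move=> H1 H2; have := leq_trans H2 H1.
  by rewrite mul2n -addnn addn1 ltnn.
pose P (w : vtx X Y) := match w with
  | inl c => ltX c x | inr y => [forall c, E c y ==> ltX c x] end.
have step : forall w w', induced_adj E U w w' -> P w -> P w'.
  move=> [c|y] [c'|y'] /and3P [wU w'U] //= Ewy.
    move=> cx; apply/forallP => c'; apply/implyP => Ec'.
    have c'S : c' \notin S by apply/negP => c'S; rewrite (inrU _ _ w'U c'S) in Ec'.
    case/orP: (cls _ c'S) => // x'c'.
    by exfalso; apply: (nobad c c' y').
  by move/forallP/(_ c')/implyP; apply.
have presG : forall Q : vtx X Y -> bool,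
    (forall w w', induced_adj E U w w' -> Q w -> Q w') ->
    forall w w', connect (induced_adj E U) w w' -> Q w -> Q w'.
  move=> Q st w w' /connectP [p pth ->]; elim: p w pth => [//|z p IH] w /= /andP [h1 h2] Pw.
  exact: IH _ h2 (st _ _ h1 Pw).
have inU : forall w, connect (induced_adj E U) v w -> w \in U.
  move=> w cw; apply: (presG (fun w => w \in U)) cw vU.
  by move=> w1 w2 /and3P [].
have symR : connect_sym (induced_adj E U).
  apply: sym_connect_sym => w w'; rewrite /induced_adj.
  rewrite andbCA; congr (_ && (_ && _)).
  by case: w w' => [c|y] [c'|y'].
case: (boolP [exists u, connect (induced_adj E U) v (inl u) && ~~ ltX x' u]).
  case/existsP => u0 /andP [cu0 nu0]; left => u cu.
  have u0x : ltX u0 x.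
    by case/orP: (cls _ (inlU _ (inU _ cu0))) => //; rewrite (negbTE nu0).
  case/orP: (cls _ (inlU _ (inU _ cu))) => // x'u; exfalso.
  have c0 : connect (induced_adj E U) (inl u0) (inl u).
    by apply: connect_trans cu; rewrite symR.
  have := presG P step _ _ c0 u0x => /= ux.
  have x'x := trX _ _ _ x'u ux.
  have [E1|ne] := eqVneq x' x; first by rewrite E1 (negbTE (irrX x)) in x'x.
  by have := trX _ _ _ x'x (xmin x' x'S ne); rewrite (negbTE (irrX x')).
move/existsPn => H; right => u cu.
by have := H u; rewrite cu /= negbK.
Qed.
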